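(* Let $p\ge1$, $m=2p$, $j=\mathrm{diag}(I_p,-I_p)$, $n>0$. Let $A$ be an $n\times n$ matrix with $\det A\neq0$, $S_0=S_0^*$ an $n\times n$ matrix and $\Pi_0$ an $n\times m$ matrix with $AS_0-S_0A^*=i\Pi_0j\Pi_0^*$. Define for $k\ge0$ $$\Pi_{k+1}=\Pi_k+iA^{-1}\Pi_kj,\qquad S_{k+1}=S_k+A^{-1}S_k(A^* )^{-1}+A^{-1}\Pi_k\Pi_k^*(A^* )^{-1}.$$ Suppose $\det S_r\neq0$ for $0\le r\le N$. Put $C_k=I_m+\Pi_k^*S_k^{-1}\Pi_k-\Pi_{k+1}^*S_{k+1}^{-1}\Pi_{k+1}$ for $0\le k<N$, and let $W_k(\lambda)$ be the solution of $W_{k+1}(\lambda)-W_k(\lambda)=-\frac{i}{\lambda}jC_kW_k(\lambda)$ with $W_0(\lambda)=I_m$. Then for $0\le k<N$ $$W_{k+1}(\lambda)=w_A(k+1,\lambda)\Big(I_m-\frac{i}{\lambda}j\Big)^{k+1}w_A(0,\lambda)^{-1},$$ where $w_A(k,\lambda)=I_m-ij\Pi_k^*S_k^{-1}(A-\lambda I_n)^{-1}\Pi_k$.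
   Context: $I_r$ denotes the $r\times r$ identity matrix; $\lambda$ is a complex parameter (the identity holds as meromorphic matrix functions of $\lambda$). *)

(* Defs.v *)
From mathcomp Require Import all_boot all_order all_algebra.
Set Implicit Arguments. Unset Strict Implicit. Unset Printing Implicit Defensive.
Import GRing.Theory Num.Theory.
Local Open Scope ring_scope.

Definition ctrmx (C : numClosedFieldType) (r c : nat) (A : 'M[C]_(r, c)) : 'M[C]_(c, r) :=
  (map_mx Num.conj A)^T.

Definition jmx (C : numClosedFieldType) (p : nat) : 'M[C]_(p + p) :=
  block_mx 1%:M 0 0 (- 1%:M).

Section Seqs.
Variables (C : numClosedFieldType) (n p : nat).
Variables (A : 'M[C]_n) (S0 : 'M[C]_n) (Pi0 : 'M[C]_(n, p + p)).

Fixpoint Pik (k : nat) : 'M[C]_(n, p + p) :=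
  match k with
  | 0 => Pi0
  | k'.+1 => Pik k' + 'i *: (invmx A *m Pik k' *m jmx C p)
  end.

Fixpoint Sk (k : nat) : 'M[C]_n :=
  match k with
  | 0 => S0
  | k'.+1 => Sk k' + invmx A *m Sk k' *m invmx (ctrmx A)
             + invmx A *m Pik k' *m ctrmx (Pik k') *m invmx (ctrmx A)
  end.

Definition Ck (k : nat) : 'M[C]_(p + p) :=
  1%:M + ctrmx (Pik k) *m invmx (Sk k) *m Pik k
  - ctrmx (Pik k.+1) *m invmx (Sk k.+1) *m Pik k.+1.

Fixpoint Wk (k : nat) (l : C) : 'M[C]_(p + p) :=
  match k with
  | 0 => 1%:M
  | k'.+1 => Wk k' l - ('i / l) *: (jmx C p *m Ck k' *m Wk k' l)
  end.

Definition wA (k : nat) (l : C) : 'M[C]_(p + p) :=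
  1%:M - 'i *: (jmx C p *m ctrmx (Pik k) *m invmx (Sk k) *m invmx (A - l%:M) *m Pik k).

End Seqs.

(* k-th power of a square matrix (matrices 'M_(p+p) carry no canonical ring
   structure since p + p is not syntactically a successor). *)
Definition mxpow (C : numClosedFieldType) (m : nat) (M : 'M[C]_m) (k : nat) : 'M[C]_m :=
  iter k (fun X => M *m X) 1%:M.

(* Main.v *)
Require Import Defs.
From mathcomp Require Import all_boot all_order all_algebra ssrAC.
Import GRing.Theory Num.Theory.
Local Open Scope ring_scope.

Section Ctr.
Variable C : numClosedFieldType.
Lemma ctrmxM r c q (X : 'M[C]_(r,c)) (Y : 'M[C]_(c,q)) : ctrmx (X *m Y) = ctrmx Y *m ctrmx X.
Proof. by rewrite /ctrmx map_mxM trmx_mul. Qed.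
Lemma ctrmxD r c (X Y : 'M[C]_(r,c)) : ctrmx (X + Y) = ctrmx X + ctrmx Y.
Proof. by rewrite /ctrmx map_mxD linearD. Qed.
Lemma ctrmxZ r c a (X : 'M[C]_(r,c)) : ctrmx (a *: X) = a^* *: ctrmx X.
Proof. by rewrite /ctrmx map_mxZ linearZ. Qed.
Lemma ctrmxV r (X : 'M[C]_r) : ctrmx (invmx X) = invmx (ctrmx X).
Proof. by rewrite /ctrmx map_invmx trmx_inv. Qed.
Lemma ctrmx_j p : ctrmx (jmx C p) = jmx C p.
Proof. rewrite /ctrmx /jmx map_block_mx tr_block_mx ?map_mx0 ?map_mxN ?map_mx1 ?trmx0 ?linearN ?trmx1 ?raddfN /=.
congr block_mx; apply/matrixP=> i j; by rewrite !mxE eq_sym. Qed.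
Lemma jj p : jmx C p *m jmx C p = 1%:M.
Proof.
by rewrite /jmx mulmx_block !mulmx0 !mul0mx !mulmx1 !addr0 !add0r mulmxN mulNmx mulmx1 opprK -scalar_mx_block.
Qed.
End Ctr.

Lemma iiZ (C : numClosedFieldType) (V : lmodType C) (x : V) : 'i *: ('i *: x) = - x.
Proof. by rewrite scalerA mulCii scaleN1r. Qed.

Lemma inv_step (C : numClosedFieldType) n m (A B Ad Bd S : 'M[C]_n) (J : 'M[C]_m)
  (P : 'M[C]_(n,m)) (Pd : 'M[C]_(m,n)) :
  A *m B = 1%:M -> B *m A = 1%:M -> Ad *m Bd = 1%:M -> Bd *m Ad = 1%:M -> J *m J = 1%:M ->
  A *m S - S *m Ad = 'i *: (P *m J *m Pd) ->
  A *m (S + B *m S *m Bd + B *m P *m Pd *m Bd) - (S + B *m S *m Bd + B *m P *m Pd *m Bd) *m Ad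
  = 'i *: ((P + 'i *: (B *m P *m J)) *m J *m (Pd - 'i *: (J *m Pd *m Bd))).
Proof.
move=> hAB hBA hAdBd hBdAd hJJ hinv.
have AdBdl k (U : 'M[C]_(k,n)) : U *m Ad *m Bd = U by rewrite -mulmxA hAdBd mulmx1.
have BdAdl k (U : 'M[C]_(k,n)) : U *m Bd *m Ad = U by rewrite -mulmxA hBdAd mulmx1.
have JJr k (U : 'M[C]_(k,m)) : U *m J *m J = U by rewrite -mulmxA hJJ mulmx1.
have hx : 'i *: (B *m P *m J *m Pd *m Bd) = S *m Bd - B *m S.
  have := congr1 (fun M => B *m M *m Bd) hinv => /=.
  rewrite mulmxBr mulmxBl !mulmxA hBA mul1mx AdBdl => ->.
  by rewrite -scalemxAr -scalemxAl !mulmxA.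
rewrite !mulmxDr !mulmxDl ?mulmxBr ?mulmxBl -?scalemxAl -?scalemxAr ?mulmxA ?mulmxN -?scalemxAr ?mulmxA hAB !mul1mx !BdAdl !JJr.
rewrite !scalerDr ?scalerN !iiZ ?opprK -hinv hx !opprD !addrA.
by rewrite (ACl (1*4*6*3*2*5)).
Qed.


Section Key.
Variables (C : numClosedFieldType) (m n : nat).
Variables (A B Ad Bd S S' Si Si' R : 'M[C]_n) (J : 'M[C]_m).
Variables (P P' : 'M[C]_(n,m)) (Pd Pd' : 'M[C]_(m,n)) (l : C).
Hypotheses (hAB : A *m B = 1%:M) (hBA : B *m A = 1%:M) (hBdAd : Bd *m Ad = 1%:M)
  (hJJ : J *m J = 1%:M) (hSSi : S *m Si = 1%:M) (hSiS : Si *m S = 1%:M)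
  (hSi'S' : Si' *m S' = 1%:M)
  (hP' : P' = P + 'i *: (B *m P *m J))
  (hPd' : Pd' = Pd - 'i *: (J *m Pd *m Bd))
  (hS' : S' = S + B *m S *m Bd + B *m P *m Pd *m Bd)
  (hinv : A *m S - S *m Ad = 'i *: (P *m J *m Pd)).

Let JJl k (X : 'M_(m,k)) : J *m (J *m X) = X.
Proof. by rewrite mulmxA hJJ mul1mx. Qed.
Let hinv' : 'i *: (P *m (J *m Pd)) = A *m S - S *m Ad.
Proof. by rewrite mulmxA hinv. Qed.

Lemma hd : (A + B) *m S = S' *m Ad + 'i *: (P' *m J *m Pd).
Proof.
rewrite hS' hP' !mulmxDl -!mulmxA hBdAd !mulmx1.
rewrite -scalemxAl -!mulmxA JJl scalerDr iiZ hinv' !addrA.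
by rewrite (ACl ((1*5)*(3*6)*4*2)) /= !subrr !add0r addrC.
Qed.

Lemma hc : J *m Pd' *m Ad = J *m Pd *m Ad - 'i *: Pd.
Proof.
by rewrite hPd' mulmxBr mulmxBl -!scalemxAr -!scalemxAl !mulmxA hJJ mul1mx -(mulmxA _ Bd) hBdAd mulmx1.
Qed.

Lemma hK (X X' : 'M[C]_(m,n)) : X *m S = J *m Pd -> X' *m S' = J *m Pd' ->
  X' *m (A + B) + 'i *: ((J + X *m P - X' *m P') *m X) = X *m A.
Proof.
move=> hX hX'.
have canS : forall U V : 'M[C]_(m,n), U *m S = V *m S -> U = V.
  by move=> U V h; rewrite -[U]mulmx1 -hSSi mulmxA h -mulmxA hSSi mulmx1.
have hAS : A *m S = S *m Ad + 'i *: (P *m J *m Pd) by rewrite -hinv addrC subrK.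
apply: canS.
rewrite mulmxDl -mulmxA hd mulmxDr mulmxA hX' hc -scalemxAl -scalemxAr.
rewrite -(mulmxA _ X S) hX !mulmxBl !mulmxDl JJl.
rewrite -(mulmxA X A S) hAS mulmxDr mulmxA hX -scalemxAr.
rewrite !mulmxA scalerBr scalerDr !addrA.
by rewrite (ACl ((1*5)*(4*2)*(3*6))) /= !subrr !addr0.
Qed.

Hypotheses (hlR : (A - l%:M) *m R = 1%:M) (hRl : R *m (A - l%:M) = 1%:M) (hl : l != 0).

Let hRA : R *m A = A *m R.
Proof.
apply: (@subIr _ (l *: R)); rewrite -[in LHS]mul_mx_scalar -mulmxBr hRl.
by rewrite -mul_scalar_mx -mulmxBl hlR.
Qed.
Let hRB : R *m B = B *m R.
Proof.
by rewrite -[R *m B]mul1mx -hBA -!mulmxA (mulmxA A R B) -hRA -mulmxA hAB mulmx1.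
Qed.
Let hlR2 : l *: R = R *m A - 1%:M.
Proof. by rewrite -hRl mulmxBr mul_mx_scalar opprB addrC subrK. Qed.
Let hl1 k q (U : 'M[C]_(k,n)) (V : 'M[C]_(n,q)) :
  l *: (U *m R *m V) = U *m R *m A *m V - U *m V.
Proof. by rewrite scalemxAl scalemxAr hlR2 mulmxBr mulmxBl mulmx1 mulmxA. Qed.

Lemma E3 (X X' : 'M[C]_(m,n)) : X *m S = J *m Pd -> X' *m S' = J *m Pd' ->
  X' *m R *m (A + B) *m P =
  X *m R *m A *m P - 'i *: ((J + X *m P - X' *m P') *m X *m R *m P).
Proof.
move=> hX hX'.
rewrite -(mulmxA X R A) hRA mulmxA -(hK X X' hX hX') !mulmxDl -!scalemxAl.
have hRAB : R *m (A + B) = (A + B) *m R by rewrite mulmxDr mulmxDl hRA hRB.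
by rewrite -(mulmxA X' R) hRAB !mulmxA !mulmxDl !mulNmx ?mulmxA addrK.
Qed.

Let ABl k (U : 'M[C]_(k,n)) : U *m A *m B = U.
Proof. by rewrite -mulmxA hAB mulmx1. Qed.
Let JJr k (U : 'M[C]_(k,m)) : U *m J *m J = U.
Proof. by rewrite -mulmxA hJJ mulmx1. Qed.

Lemma key (X X' : 'M[C]_(m,n)) : X *m S = J *m Pd -> X' *m S' = J *m Pd' ->
  (1%:M - 'i *: (X' *m R *m P')) *m (1%:M - ('i / l) *: J) =
  (1%:M - ('i / l) *: (J + X *m P - X' *m P')) *m (1%:M - 'i *: (X *m R *m P)).
Proof.
move=> hX hX'.
have hli : l * ('i / l) = 'i by rewrite mulrC divfK.
have E1 : l *: ((1%:M - 'i *: (X' *m R *m P')) *m (1%:M - ('i / l) *: J)) =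
   l%:M - 'i *: J + 'i *: (X' *m P') - 'i *: (X' *m R *m (A + B) *m P).
  rewrite mulmxBl mul1mx mulmxBr mulmx1 -scalemxAl -scalemxAr scalerA.
  rewrite !scalerBr scalerA hli.
  rewrite (scalerA l 'i) (mulrC l 'i) -(scalerA 'i l) hl1 !scalerA mulrCA hli mulCii scaleN1r scalemx1.
  rewrite hP' !mulmxDr !mulmxDl -!scalemxAr -!scalemxAl !mulmxA ABl JJr !scalerDr ?scalerBr !scalerN !iiZ !opprD !opprK !addrA.
  rewrite ?scalerDr ?scalerBr ?scalerN ?iiZ ?opprD ?opprK ?addrA.
  by rewrite (ACl (1*2*5*6*3*8*(4*7))) /= subrr addr0.
set JC := J + X *m P - X' *m P'.
have E2 : l *: ((1%:M - ('i / l) *: JC) *m (1%:M - 'i *: (X *m R *m P))) =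
   l%:M - 'i *: J + 'i *: (X' *m P') - 'i *: (X *m R *m A *m P) - JC *m X *m R *m P.
  rewrite mulmxBl mul1mx mulmxBr mulmx1 -scalemxAl -scalemxAr scalerA.
  rewrite !scalerBr (scalerA l 'i) (mulrC l 'i) -(scalerA 'i l) hl1.
  rewrite !scalerA hli mulrA hli mulCii scaleN1r scalemx1 !mulmxA.
  rewrite ?scalerDr ?scalerBr !opprD !opprK !addrA ?scalerN ?opprK.
  by rewrite (ACl (1*4*6*2*7*(3*5))) /= subrr addr0.
apply: (scalerI hl).
rewrite E1 E2 (E3 X X' hX hX') -/JC.
by rewrite scalerBr iiZ opprK opprD addrA.
Qed.
End Key.


Theorem theorem2p2 (C : numClosedFieldType) (p n N : nat)
  (A S0 : 'M[C]_n) (Pi0 : 'M[C]_(n, p + p)) :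
  (0 < p)%N -> (0 < n)%N ->
  A \in unitmx ->
  ctrmx S0 = S0 ->
  A *m S0 - S0 *m ctrmx A = 'i *: (Pi0 *m jmx C p *m ctrmx Pi0) ->
  (forall r, (r <= N)%N -> Sk A S0 Pi0 r \in unitmx) ->
  forall k, (k < N)%N ->
  forall l : C, l != 0 -> (A - l%:M) \in unitmx ->
    wA A S0 Pi0 0 l \in unitmx ->
    Wk A S0 Pi0 k.+1 l =
      wA A S0 Pi0 k.+1 l *m mxpow (1%:M - ('i / l) *: jmx C p) k.+1
        *m invmx (wA A S0 Pi0 0 l).
Proof.
move=> hp hn hA hS0 hinv0 hSu k hk l hl hAl hw0.
have hAB : A *m invmx A = 1%:M by rewrite mulmxV.
have hBA : invmx A *m A = 1%:M by rewrite mulVmx.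
have hAd : ctrmx A \in unitmx by rewrite /ctrmx unitmx_tr map_unitmx.
have hAdBd : ctrmx A *m invmx (ctrmx A) = 1%:M by rewrite mulmxV.
have hBdAd : invmx (ctrmx A) *m ctrmx A = 1%:M by rewrite mulVmx.
have hJJ := jj C p.
have hPd : forall r, ctrmx (Pik A Pi0 r.+1) =
    ctrmx (Pik A Pi0 r) - 'i *: (jmx C p *m ctrmx (Pik A Pi0 r) *m invmx (ctrmx A)).
  move=> r; rewrite /= ctrmxD ctrmxZ !ctrmxM conjCi ctrmx_j ctrmxV scaleNr mulmxA.
  done.
have hI : forall r, A *m Sk A S0 Pi0 r - Sk A S0 Pi0 r *m ctrmx A =
    'i *: (Pik A Pi0 r *m jmx C p *m ctrmx (Pik A Pi0 r)).
  elim=> [|r IH] //.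
  rewrite hPd.
  have H := @inv_step C n (p+p) A _ _ _ _ _ _ _ hAB hBA hAdBd hBdAd hJJ IH. exact H.
have hmain : forall r, (r <= N)%N -> Wk A S0 Pi0 r l =
    wA A S0 Pi0 r l *m mxpow (1%:M - ('i / l) *: jmx C p) r *m invmx (wA A S0 Pi0 0 l).
  elim=> [_|r IH hr].
    by rewrite /= mulmx1 mulmxV.
  have hr' : (r <= N)%N by apply: ltnW.
  have hSr := hSu r hr'.
  have hSr1 := hSu r.+1 hr.
  have -> : Wk A S0 Pi0 r.+1 l =
      (1%:M - ('i / l) *: (jmx C p *m Ck A S0 Pi0 r)) *m Wk A S0 Pi0 r l.
    by rewrite /= mulmxBl mul1mx -scalemxAl.
  rewrite IH // !mulmxA.
  have -> : jmx C p *m Ck A S0 Pi0 r =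
     jmx C p + jmx C p *m ctrmx (Pik A Pi0 r) *m invmx (Sk A S0 Pi0 r) *m Pik A Pi0 r
     - jmx C p *m ctrmx (Pik A Pi0 r.+1) *m invmx (Sk A S0 Pi0 r.+1) *m Pik A Pi0 r.+1.
    by rewrite /Ck mulmxBr mulmxDr mulmx1 !mulmxA.
  have hlR : (A - l%:M) *m invmx (A - l%:M) = 1%:M by rewrite mulmxV.
  have hRl : invmx (A - l%:M) *m (A - l%:M) = 1%:M by rewrite mulVmx.
  have hX : jmx C p *m ctrmx (Pik A Pi0 r) *m invmx (Sk A S0 Pi0 r) *m Sk A S0 Pi0 r
      = jmx C p *m ctrmx (Pik A Pi0 r) by rewrite -mulmxA mulVmx ?mulmx1.
  have hX' : jmx C p *m ctrmx (Pik A Pi0 r.+1) *m invmx (Sk A S0 Pi0 r.+1) *m Sk A S0 Pi0 r.+1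
      = jmx C p *m ctrmx (Pik A Pi0 r.+1) by rewrite -mulmxA mulVmx ?mulmx1.
  have hSSi : Sk A S0 Pi0 r *m invmx (Sk A S0 Pi0 r) = 1%:M by rewrite mulmxV.
  rewrite -(@key C (p+p) n A _ _ _ _ _ _ _ _ _ _ _ _ _ hAB hBA hBdAd hJJ hSSi erefl (hPd r) erefl (hI r) hlR hRl hl _ _ hX hX').
  by rewrite -(mulmxA _ (1%:M - _)).
exact: hmain.
Qed.
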